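(* For $\varepsilon\in[0,1]$, let $C(\varepsilon)=\min\{C(P,Q) : P,Q \text{ probability distributions on a common countable set with } d_{\text{TV}}(P,Q)=\varepsilon\}$. This minimum exists and $$C(\varepsilon)=\begin{cases}-\frac12\log(1-\varepsilon^2) & \text{if } \varepsilon\in[0,1),\\ +\infty & \text{if } \varepsilon=1.\end{cases}$$ For $\varepsilon\in[0,1)$ it is achieved by the pair of 2-element distributions $P=\left(\frac{1-\varepsilon}{2},\frac{1+\varepsilon}{2}\right)$, $Q=\left(\frac{1+\varepsilon}{2},\frac{1-\varepsilon}{2}\right)$.
   Context: For probability distributions $P,Q$ on a countable set, $d_{\text{TV}}(P,Q)=\frac12\sum_x|P(x)-Q(x)|$ is the total variation distance, and the Chernoff information is $C(P,Q)=-\min_{\lambda\in[0,1]}\log\left(\sum_x P(x)^\lambda Q(x)^{1-\lambda}\right)$. Logarithms are natural. *)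

(* Defs.v *)
From HB Require Import structures.
From mathcomp Require Import all_boot all_order all_algebra.
From mathcomp Require Import all_classical all_reals all_analysis.
Set Implicit Arguments. Unset Strict Implicit. Unset Printing Implicit Defensive.
Import Order.TTheory GRing.Theory Num.Theory.
Local Open Scope classical_set_scope.
Local Open Scope ring_scope.

Definition is_distr (R : realType) (T : countType) (P : T -> R) : Prop :=
  (forall x, 0 <= P x) /\ (\esum_(x in [set: T]) (P x)%:E = 1%E).

Definition tv_dist (R : realType) (T : countType) (P Q : T -> R) : \bar R :=
  ((2^-1)%:E * \esum_(x in [set: T]) (`|P x - Q x|)%:E)%E.

(* sum_x P(x)^lambda Q(x)^(1-lambda), with the convention 0^0 = 1 (powR). *)
Definition chernoff_sum (R : realType) (T : countType) (P Q : T -> R)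
  (l : R) : \bar R :=
  \esum_(x in [set: T]) (P x `^ l * Q x `^ (1 - l))%:E.

Definition neg_log_e (R : realType) (s : \bar R) : \bar R :=
  match s with
  | r%:E => if r == 0 then +oo%E else (- ln r)%:E
  | +oo%E => -oo%E
  | -oo%E => +oo%E
  end.

(* Chernoff information C(P,Q) = - min_{l in [0,1]} log(sum_x P^l Q^(1-l))
   = sup_{l in [0,1]} -log(...), valued in extended reals. *)
Definition chernoff_info (R : realType) (T : countType) (P Q : T -> R) : \bar R :=
  ereal_sup [set neg_log_e (chernoff_sum P Q l) | l in `[0, 1]%classic].

Definition Ceps (R : realType) (e : R) : \bar R :=
  if e < 1 then (- (2^-1) * ln (1 - e ^+ 2))%:E else +oo%E.

(* The extremal pair on a 2-element set (bool: false ~ first, true ~ second). *)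
Definition Pext (R : realType) (e : R) (b : bool) : R :=
  if b then (1 + e) / 2 else (1 - e) / 2.
Definition Qext (R : realType) (e : R) (b : bool) : R :=
  if b then (1 - e) / 2 else (1 + e) / 2.

(* Main.v *)
Require Import Defs.
From mathcomp Require Import all_boot all_order all_algebra.
From mathcomp Require Import all_classical all_reals all_analysis.
From mathcomp Require Import ring lra.
Import Order.TTheory GRing.Theory Num.Theory.
Local Open Scope ring_scope.

Section Helpers.
Local Set Implicit Arguments.
Local Unset Strict Implicit.
Local Open Scope classical_set_scope.

Lemma esum_bool (R : realType) (a : bool -> \bar R) :
  (forall i, (0 <= a i)%E) -> (\esum_(i in [set: bool]) a i = a false + a true)%E.
Proof.
move=> a0; rewrite esum_fset; [|exact: finite_finset|by []].
have -> : [set: bool] = [set false] `|` [set true].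
  by apply/seteqP; split => // -[] _; [right|left].
rewrite fsbigU0; [by rewrite !fsbig_set1|exact: finite_finset|exact: finite_finset|by move=> x [/= -> ]].
Qed.

Lemma esumZ (R : realType) (T : choiceType) (a : T -> \bar R) (r : R) :
  0 <= r -> (forall i, (0 <= a i)%E) ->
  (\esum_(i in [set: T]) (r%:E * a i) = r%:E * \esum_(i in [set: T]) a i)%E.
Proof.
move=> r0 a0; have [->|rp] := eqVneq r 0.
  by rewrite mul0e esum1 // => i _; rewrite mul0e.
have rpos : 0 < r by rewrite lt0r rp.
rewrite /esum -ereal_sup_pZl //; congr ereal_sup.
rewrite image_comp; apply: eq_imagel => A _ /=; rewrite ge0_mule_fsumr //.
Qed.

Lemma pt (R : realType) (u v t : R) : 0 <= u -> 0 <= v -> 1 <= t ->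
  4 * (u * v) + (t - t^-1) * `|u ^+ 2 - v ^+ 2| <= (t + t^-1) * (u ^+ 2 + v ^+ 2).
Proof.
move=> u0 v0 t1.
have t0 : 0 < t by lra.
have tw : t * t^-1 = 1 by rewrite mulfV // gt_eqF.
have w0 : 0 <= t^-1 by rewrite invr_ge0 ltW.
have [uv|vu] := leP u v.
  have -> : `|u ^+ 2 - v ^+ 2| = v ^+ 2 - u ^+ 2.
    rewrite ler0_norm; first by rewrite opprB.
    by rewrite subr_le0 ler_sqr // nnegrE.
  have := mulr_ge0 w0 (sqr_ge0 (t * u - v)).
  have E : t^-1 * (t * u - v) ^+ 2 - (t * u ^+ 2 - 2 * u * v + t^-1 * v ^+ 2)
     = (t * t^-1 - 1) * (t * u ^+ 2 - 2 * u * v) by ring.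
  rewrite tw subrr mul0r in E.
  lra.
have -> : `|u ^+ 2 - v ^+ 2| = u ^+ 2 - v ^+ 2.
  by rewrite ger0_norm // subr_ge0 ler_sqr ?nnegrE // ltW.
have := mulr_ge0 w0 (sqr_ge0 (t * v - u)).
have E : t^-1 * (t * v - u) ^+ 2 - (t * v ^+ 2 - 2 * u * v + t^-1 * u ^+ 2)
   = (t * t^-1 - 1) * (t * v ^+ 2 - 2 * u * v) by ring.
rewrite tw subrr mul0r in E.
lra.
Qed.

Lemma bc_bound (R : realType) (T : countType) (P Q : T -> R) (e t : R) :
  (forall x, 0 <= P x) -> (forall x, 0 <= Q x) ->
  (\esum_(x in [set: T]) (P x)%:E = 1)%E ->
  (\esum_(x in [set: T]) (Q x)%:E = 1)%E ->
  (\esum_(x in [set: T]) (`|P x - Q x|)%:E = (2 * e)%:E)%E ->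
  1 <= t ->
  exists b, (\esum_(x in [set: T]) (Num.sqrt (P x) * Num.sqrt (Q x))%:E = b%:E)%E
     /\ 0 <= b /\ 2 * b * t <= t ^+ 2 * (1 - e) + (1 + e).
Proof.
move=> P0 Q0 sP sQ sD t1.
have t0 : 0 < t by lra.
have tw : t * t^-1 = 1 by rewrite mulfV // gt_eqF.
have w0 : 0 <= t^-1 by rewrite invr_ge0 ltW.
have twp : 0 <= t - t^-1.
  rewrite subr_ge0 (le_trans _ t1) // invf_le1 //.
set BC := (\esum_(x in [set: T]) (Num.sqrt (P x) * Num.sqrt (Q x))%:E)%E.
have BC0 : (0 <= BC)%E by apply: esum_ge0 => x _; rewrite lee_fin mulr_ge0 ?sqrtr_ge0.
have H : (\esum_(x in [set: T]) (4 * (Num.sqrt (P x) * Num.sqrt (Q x)))%:E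
    + \esum_(x in [set: T]) ((t - t^-1) * `|P x - Q x|)%:E
    <= \esum_(x in [set: T]) ((t + t^-1) * (P x + Q x))%:E)%E.
  rewrite -esumD; last 2 first.
  - by move=> x _; rewrite lee_fin mulr_ge0 // mulr_ge0 ?sqrtr_ge0.
  - by move=> x _; rewrite lee_fin mulr_ge0.
  apply: le_esum => x _; rewrite -EFinD lee_fin.
  have := pt (sqrtr_ge0 (P x)) (sqrtr_ge0 (Q x)) t1.
  by rewrite !sqr_sqrtr.
have E1 : (\esum_(x in [set: T]) (4 * (Num.sqrt (P x) * Num.sqrt (Q x)))%:E = 4%:E * BC)%E.
  rewrite -(@esumZ _ _ (fun x => (Num.sqrt (P x) * Num.sqrt (Q x))%:E)) //.
have E2 : (\esum_(x in [set: T]) ((t - t^-1) * `|P x - Q x|)%:E = ((t - t^-1) * (2 * e))%:E)%E.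
  rewrite EFinM -sD -esumZ //.
have E3 : (\esum_(x in [set: T]) ((t + t^-1) * (P x + Q x))%:E = (t + t^-1)%:E * (\esum_(x in [set: T]) (P x)%:E + \esum_(x in [set: T]) (Q x)%:E))%E.
  rewrite -esumD; last 2 first.
  - by move=> x _; rewrite lee_fin.
  - by move=> x _; rewrite lee_fin.
  rewrite -esumZ; last 2 first.
  - by rewrite addr_ge0 // ltW.
  - by move=> x; rewrite adde_ge0 // lee_fin.
  by apply: eq_esum => x _; rewrite EFinM EFinD.
move: H; rewrite E1 E2 E3 sP sQ; clear E1 E2 E3.
move: BC0; case: BC => [b||] // b0.
  move=> H0.
  have H : 4 * b + (t - t^-1) * (2 * e) <= (t + t^-1) * (1 + 1) by rewrite -lee_fin; exact: H0.
  exists b; split => //; split; first by rewrite -lee_fin.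
  have : t * (4 * b + (t - t^-1) * (2 * e)) <= t * ((t + t^-1) * (1 + 1)).
    by rewrite ler_pM2l.
  have E1 : t * (4 * b + (t - t^-1) * (2 * e)) = 4 * b * t + (t ^+ 2 - t * t^-1) * (2 * e) by ring.
  have E2 : t * ((t + t^-1) * (1 + 1)) = 2 * (t ^+ 2 + t * t^-1) by ring.
  rewrite E1 E2 tw.
  nra.
by rewrite mulry gtr0_sg // mul1e addye.
Qed.

Lemma chernoff_half (R : realType) (T : countType) (P Q : T -> R) :
  (forall x, 0 <= P x) -> (forall x, 0 <= Q x) ->
  chernoff_sum P Q (2^-1) = (\esum_(x in [set: T]) (Num.sqrt (P x) * Num.sqrt (Q x))%:E)%E.
Proof.
move=> P0 Q0; rewrite /chernoff_sum; apply: eq_esum => x _.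
have -> : 1 - 2^-1 = 2^-1 :> R by field.
by rewrite !powR12_sqrt.
Qed.

Lemma tv_esum (R : realType) (T : countType) (P Q : T -> R) e :
  tv_dist P Q = e%:E -> (\esum_(x in [set: T]) (`|P x - Q x|)%:E = (2 * e)%:E)%E.
Proof.
rewrite /tv_dist.
have : (0 <= \esum_(x in [set: T]) (`|P x - Q x|)%:E)%E.
  by apply: esum_ge0 => x _; rewrite lee_fin.
case: (\esum_(x in [set: T]) _) => [s| |] H0.
- move/eqP; rewrite -EFinM eqe => /eqP <-.
  by congr EFin; field.
- by rewrite mulry gtr0_sg // mul1e.
- by [].
Qed.

Lemma lower (R : realType) (T : countType) (P Q : T -> R) (e : R) :
  0 <= e -> e <= 1 -> is_distr P -> is_distr Q -> tv_dist P Q = e%:E ->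
  (Ceps e <= chernoff_info P Q)%E.
Proof.
move=> e0 e1 [P0 sP] [Q0 sQ] /tv_esum sD.
apply: (@le_trans _ _ (neg_log_e (chernoff_sum P Q (2^-1)))); last first.
  apply: ereal_sup_ubound; exists (2^-1) => //=.
  by rewrite in_itv /= invr_ge0 ler0n /= invf_le1 ?ler1n.
rewrite chernoff_half //.
have [elt|ege] := ltP e 1.
  set s := Num.sqrt (1 - e ^+ 2).
  have hs2 : s ^+ 2 = 1 - e ^+ 2 by rewrite sqr_sqrtr // subr_ge0; nra.
  have s0 : 0 < s by rewrite sqrtr_gt0; nra.
  have s1 : s <= 1 by nra.
  have t1 : 1 <= (1 + e) / s by rewrite ler_pdivlMr // mul1r; lra.
  have [b [hb [b0 H]]] := bc_bound P0 Q0 sP sQ sD t1.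
  rewrite hb /neg_log_e /Ceps elt.
  have bs : b <= s.
    have ts : (1 + e) / s * s = 1 + e by rewrite divfK // gt_eqF.
    move: ((1 + e) / s) ts H => t ts H.
    have H2 := ler_wpM2l (sqr_ge0 s) H.
    have E1 : s ^+ 2 * (2 * b * t) = 2 * b * s * (t * s) by ring.
    have E2 : s ^+ 2 * (t ^+ 2 * (1 - e) + (1 + e)) = (t * s) ^+ 2 * (1 - e) + s ^+ 2 * (1 + e) by ring.
    rewrite E1 E2 ts hs2 in H2.
    have E3 : (1 + e) ^+ 2 * (1 - e) + (1 - e ^+ 2) * (1 + e) = (2 * (1 + e) * s) * s.
      by rewrite -[_ * s * s]mulrA -expr2 hs2; ring.
    have E4 : 2 * b * s * (1 + e) = (2 * (1 + e) * s) * b by ring.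
    rewrite E3 E4 in H2.
    by rewrite -(ler_pM2l (_ : 0 < 2 * (1 + e) * s)) //; apply: mulr_gt0 => //; lra.
  case: ifP => [_|/negbT bn0]; first by rewrite leey.
  have bpos : 0 < b by rewrite lt0r bn0.
  rewrite lee_fin.
  have : ln b <= ln s by rewrite ler_ln // posrE.
  have : ln (1 - e ^+ 2) = ln s *+ 2 by rewrite -hs2 lnXn.
  rewrite mulr2n; lra.
have ee : e = 1 by apply: le_anti; rewrite e1 ege.
subst e.
rewrite /Ceps ltxx.
have [b [hb [b0 _]]] := bc_bound P0 Q0 sP sQ sD (lexx 1).
rewrite hb /neg_log_e; case: eqP => // /eqP bn0.
have bpos : 0 < b by rewrite lt0r bn0.
have t1 : 1 <= 1 + b^-1 by rewrite lerDl invr_ge0.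
have [b' [hb' [_ H]]] := bc_bound P0 Q0 sP sQ sD t1.
have bb : b' = b by move: hb'; rewrite hb => -[].
rewrite bb subrr mulr0 add0r mulrDr mulr1 mulfK // in H.
exfalso; lra.
Qed.

Lemma ext_props (R : realType) (e : R) : 0 <= e -> e <= 1 ->
  [/\ is_distr (Pext e), is_distr (Qext e) & tv_dist (Pext e) (Qext e) = e%:E].
Proof.
move=> e0 e1.
have PE : forall x, 0 <= Pext e x by case; rewrite /Pext /=; lra.
have QE : forall x, 0 <= Qext e x by case; rewrite /Qext /=; lra.
have SP : (\esum_(x in [set: bool]) (Pext e x)%:E = 1)%E.
  rewrite esum_bool; last by move=> i; rewrite lee_fin.
  by rewrite /Pext /= -EFinD; congr EFin; field.
have SQ : (\esum_(x in [set: bool]) (Qext e x)%:E = 1)%E.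
  rewrite esum_bool; last by move=> i; rewrite lee_fin.
  by rewrite /Qext /= -EFinD; congr EFin; field.
split; [by split|by split|].
rewrite /tv_dist esum_bool; last by move=> i; rewrite lee_fin.
rewrite /Pext /Qext /=.
have -> : (1 - e) / 2 - (1 + e) / 2 = - e by field.
have -> : (1 + e) / 2 - (1 - e) / 2 = e by field.
by rewrite normrN ger0_norm // -EFinD -EFinM; congr EFin; field.
Qed.

Lemma key2 (R : realType) (a c l : R) : 0 < a -> 0 < c ->
  4 * (a * c) <= (a `^ l * c `^ (1 - l) + c `^ l * a `^ (1 - l)) ^+ 2.
Proof.
move=> a0 c0.
have E : (a `^ l * c `^ (1 - l)) * (c `^ l * a `^ (1 - l)) = (a `^ l * a `^ (1 - l)) * (c `^ l * c `^ (1 - l)) by ring.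
have xy : (a `^ l * c `^ (1 - l)) * (c `^ l * a `^ (1 - l)) = a * c.
  rewrite E -!powRD.
  - by rewrite addrC subrK !powRr1 // ltW.
  - by apply/implyP => _; rewrite gt_eqF.
  - by apply/implyP => _; rewrite gt_eqF.
move: (a `^ l * c `^ (1 - l)) (c `^ l * a `^ (1 - l)) xy => x y xy.
rewrite -xy.
have := sqr_ge0 (x - y).
nra.
Qed.
Lemma key3 (R : realType) (e l : R) : 0 <= e -> e < 1 ->
  (neg_log_e ((((1 - e) / 2) `^ l * ((1 + e) / 2) `^ (1 - l))%:E
     + (((1 + e) / 2) `^ l * ((1 - e) / 2) `^ (1 - l))%:E)
   <= (- (2^-1) * ln (1 - e ^+ 2))%:E)%E.
Proof.
move=> e0 e1.
have ha : 0 < (1 - e) / 2 by lra.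
have hc : 0 < (1 + e) / 2 by lra.
have hk := key2 l ha hc.
have hz : 0 < ((1 - e) / 2) `^ l * ((1 + e) / 2) `^ (1 - l) + ((1 + e) / 2) `^ l * ((1 - e) / 2) `^ (1 - l).
  by rewrite addr_gt0 // mulr_gt0 // powR_gt0.
rewrite -EFinD /neg_log_e.
move: (((1 - e) / 2) `^ l * ((1 + e) / 2) `^ (1 - l) + ((1 + e) / 2) `^ l * ((1 - e) / 2) `^ (1 - l)) hk hz => z hk hz.
rewrite (gt_eqF hz) lee_fin.
have E4 : 4 * ((1 - e) / 2 * ((1 + e) / 2)) = 1 - e ^+ 2 by field.
rewrite E4 in hk.
have h1 : 0 < 1 - e ^+ 2 by nra.
have : ln (1 - e ^+ 2) <= ln (z ^+ 2) by rewrite ler_ln // posrE // exprn_gt0.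
rewrite lnXn // mulr2n.
lra.
Qed.

Lemma ext_upper (R : realType) (e : R) : 0 <= e -> e < 1 ->
  (chernoff_info (Pext e) (Qext e) <= Ceps e)%E.
Proof.
move=> e0 e1.
apply: ge_ereal_sup => _ [l hl <-].
rewrite /chernoff_sum esum_bool; last by move=> i; rewrite lee_fin mulr_ge0 ?powR_ge0.
have pf : Pext e false = (1 - e) / 2 by [].
have pt' : Pext e true = (1 + e) / 2 by [].
have qf : Qext e false = (1 + e) / 2 by [].
have qt : Qext e true = (1 - e) / 2 by [].
rewrite pf pt' qf qt /Ceps e1.
exact: key3.
Qed.
End Helpers.

Theorem proposition2 (R : realType) (e : R) (he0 : 0 <= e) (he1 : e <= 1) :
  (* lower bound over all pairs on all countable sets with d_TV = e *)
  (forall (T : countType) (P Q : T -> R),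
      is_distr P -> is_distr Q -> tv_dist P Q = e%:E ->
      (Ceps e <= chernoff_info P Q)%E) /\
  (* the minimum exists (is attained) *)
  (exists (T : countType) (P Q : T -> R),
      [/\ is_distr P, is_distr Q, tv_dist P Q = e%:E & chernoff_info P Q = Ceps e]) /\
  (* for e < 1 it is attained by the explicit 2-element pair *)
  (e < 1 ->
     [/\ is_distr (Pext e), is_distr (Qext e), tv_dist (Pext e) (Qext e) = e%:E
       & chernoff_info (Pext e) (Qext e) = Ceps e]).
Proof.
have [hP hQ ht] := ext_props he0 he1.
split; first by move=> T P Q hP' hQ' ht'; exact: lower.
split.
  exists bool, (Pext e), (Qext e); split => //.
  apply: le_anti; rewrite lower // andbT.
  have [elt|ege] := ltP e 1; first exact: ext_upper.
  by rewrite /Ceps ltNge ege /= leey.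
move=> elt; split => //.
by apply: le_anti; rewrite lower // ext_upper.
Qed.
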